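(* Let $n\geq 1$. The symmetric group $\mathfrak{S}_{n+1}$ admits the presentation $$\langle r_1,\dots,r_n\mid r_1^2=1,\ \ r_1r_jr_i=r_{i+1}r_j\ \text{for } 1\leq i<j\leq n\rangle,$$ where $r_i$ corresponds to the cycle $(1,2,\dots,i+1)$ for $1\leq i\leq n$. *)

(* Defs.v *)
From mathcomp Require Import all_boot all_order all_fingroup.
From mathcomp Require Import zify.
Set Implicit Arguments. Unset Strict Implicit. Unset Printing Implicit Defensive.


(* The cycle (0, 1, ..., m-1) on 'I_n.+1 (0-based), i.e. the paper's cycle
   (1, 2, ..., m) on {1, ..., n+1}, as a function: x |-> x+1 for x < m-1,
   m-1 |-> 0, and x |-> x for x >= m.  Meaningful for 1 <= m <= n+1. *)
Definition cyc_fun (n m : nat) (x : 'I_n.+1) : 'I_n.+1 :=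
  if ((x : nat).+1 < m)%N then inord (x : nat).+1
  else if ((x : nat).+1 == m)%N then ord0 else x.

Lemma cyc_fun_inj n m : m <= n.+1 -> injective (@cyc_fun n m).
Proof.
move=> hm x y; rewrite /cyc_fun.
have hx := ltn_ord x; have hy := ltn_ord y.
case: (ltnP x.+1 m) => h1; case: (ltnP y.+1 m) => h2;
  case: (x.+1 =P m) => e1; case: (y.+1 =P m) => e2;
  move/(congr1 val); rewrite /= ?inordK; try lia;
  move=> e; apply: val_inj; rewrite /=; lia.
Qed.

(* The permutation of 'I_n.+1 given by the cycle (0,...,m-1); the identity
   if m > n.+1 (never used in that range). *)
Definition cyc (n m : nat) : 'S_n.+1 :=
  match leqP m n.+1 with
  | LeqNotGtn h => perm (@cyc_fun_inj n m h)
  | GtnNotLeq _ => 1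
  end.

Definition r (n i : nat) : 'S_n.+1 := cyc n i.+1.

(* Product of permutations as composition of functions, (s o t)(x) = s (t x),
   which is the convention of the paper (MathComp's [*] on perms is
   (s * t) x = t (s x)). *)
Definition compp (n : nat) (s t : 'S_n.+1) : 'S_n.+1 := (t * s)%g.

Record group_str := GroupStr {
  gcar :> Type;
  gmul : gcar -> gcar -> gcar;
  gone : gcar;
  ginv : gcar -> gcar;
  gmulA : forall x y z, gmul x (gmul y z) = gmul (gmul x y) z;
  gmul1 : forall x, gmul gone x = x;
  gmulV : forall x, gmul (ginv x) x = gone
}.

Definition pres_relations (G : Type) (mul : G -> G -> G) (one : G)
    (n : nat) (x : nat -> G) : Prop :=
  mul (x 1) (x 1) = one /\
  forall i j, 1 <= i -> i < j -> j <= n ->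
    mul (mul (x 1) (x j)) (x i) = mul (x i.+1) (x j).

(* Main.v *)
Require Import Defs.
From mathcomp Require Import all_boot all_order all_fingroup.
From mathcomp Require Import zify.
From Stdlib Require Import ClassicalDescription.
Set Implicit Arguments. Unset Strict Implicit. Unset Printing Implicit Defensive.
Import GroupScope.

Lemma rval n i (x : 'I_n.+1) : i <= n ->
  val (r n i x) = if (x < i)%N then x.+1 else if (x == i :> nat) then 0%N else val x.
Proof.
move=> hi; rewrite /r /cyc; case: leqP => h; last by lia.
rewrite permE /cyc_fun ltnS eqSS.
case: ifP => h1; first by rewrite /= inordK //; lia.
by case: ifP.
Qed.

Lemma r0 n : r n 0 = 1.
Proof. apply/permP => x; apply: val_inj; rewrite rval // ltn0 perm1; by case: ifP => // /eqP h; rewrite -h. Qed.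

Lemma rel_perm n : pres_relations (@compp n) 1 n (r n).
Proof.
split.
  apply/permP => x; apply: val_inj; rewrite /compp permM perm1.
  have hx := ltn_ord x.
  case: n x hx => [|n] x hx; first by rewrite /r /cyc; case: leqP => //; rewrite perm1 perm1.
  rewrite !rval //; repeat (case: ifP => /=); try lia; (try move/eqP); lia.
move=> i j h1 h2 h3; apply/permP => x; apply: val_inj; rewrite /compp !permM.
have hx := ltn_ord x.
rewrite !rval //; try lia; repeat (case: ifP => /=); try lia; (try move/eqP); (try move/eqP); lia.
Qed.

Local Close Scope group_scope.

Section GS.
Variable H : group_str.
Local Notation m := (@gmul H).
Local Notation e := (@gone H).
Local Notation iv := (@ginv H).

Lemma gmulVr (x : gcar H) : m x (iv x) = e.
Proof.
by rewrite -[LHS]gmul1 -(gmulV (iv x)) -gmulA (gmulA (iv x) x) gmulV gmul1 gmulV.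
Qed.

Lemma gmulr1 (x : gcar H) : m x e = x.
Proof. by rewrite -(gmulV x) gmulA gmulVr gmul1. Qed.

Lemma gmulK (x y : gcar H) : m (iv x) (m x y) = y.
Proof. by rewrite gmulA gmulV gmul1. Qed.
Lemma gmulKV (x y : gcar H) : m x (m (iv x) y) = y.
Proof. by rewrite gmulA gmulVr gmul1. Qed.

Lemma gcancl (x y z : gcar H) : m x y = m x z -> y = z.
Proof. by move=> E; rewrite -(gmulK x y) E gmulK. Qed.
Lemma gcancr (x y z : gcar H) : m y x = m z x -> y = z.
Proof. by move=> E; rewrite -(gmulr1 y) -(gmulVr x) gmulA E -gmulA gmulVr gmulr1. Qed.

Lemma ginv_uniq (x y : gcar H) : m x y = e -> x = iv y.
Proof. by move=> E; apply: (@gcancr y); rewrite E gmulV. Qed.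

Fixpoint hpow (x : gcar H) (k : nat) : H := if k is k'.+1 then m x (hpow x k') else e.

Lemma hpowS' x k : hpow x k.+1 = m (hpow x k) x.
Proof. elim: k => [|k IH] /=; first by rewrite gmulr1 gmul1. by rewrite -gmulA -IH. Qed.

Lemma hpowD x a b : hpow x (a + b) = m (hpow x a) (hpow x b).
Proof. elim: a => [|a IH] /=; first by rewrite gmul1. by rewrite IH gmulA. Qed.

Lemma hpow_mod x N a : hpow x N.+1 = e -> hpow x a = hpow x (a %% N.+1).
Proof.
move=> E; rewrite {1}(divn_eq a N.+1) hpowD.
suff -> : hpow x (a %/ N.+1 * N.+1) = e by rewrite gmul1.
elim: (a %/ N.+1) => [|q IH] //.
by rewrite mulSn hpowD E gmul1.
Qed.

Lemma hpow_conj y x k : hpow (m (iv y) (m x y)) k = m (iv y) (m (hpow x k) y).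
Proof.
elim: k => [|k IH] /=; first by rewrite gmul1 gmulV.
by rewrite IH -!gmulA gmulKV.
Qed.

End GS.

Definition gg (H : group_str) (h : nat -> gcar H) (k : nat) : gcar H :=
  if k is 0 then @gone H else h k.

Section Rel.
Variable H : group_str.
Local Notation m := (@gmul H).
Local Notation e := (@gone H).
Local Notation iv := (@ginv H).
Variables (N : nat) (h : nat -> gcar H).
Hypothesis hN : 1 <= N.
Hypothesis hrel : pres_relations (@gmul H) (@gone H) N h.
Local Notation g := (gg h).

Lemma Rp i z : i < N -> m (h 1) (m (h N) (m (g i) z)) = m (g i.+1) (m (h N) z).
Proof.
case: i => [|i] hi /=; first by rewrite gmul1.
case: hrel => _ R; by rewrite !gmulA R // -gmulA.
Qed.

Lemma L1 a k z : a + k <= N ->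
  m (g a) (m (hpow (h N) a) (m (g k) z)) = m (g (a + k)) (m (hpow (h N) a) z).
Proof.
elim: a => [|a IH] hak /=; first by rewrite !gmul1.
rewrite -gmulA -Rp; last by lia.
rewrite IH; last by lia.
rewrite Rp; last by lia.
by rewrite -gmulA addSn.
Qed.

Lemma L1inv a k z : a + k <= N ->
  m (hpow (h N) a) (m (g k) z) = m (iv (g a)) (m (g (a + k)) (m (hpow (h N) a) z)).
Proof. by move=> hak; rewrite -L1 // gmulK. Qed.

Lemma h11 z : m (h 1) (m (h 1) z) = z.
Proof. by case: hrel => E _; rewrite gmulA E gmul1. Qed.

Lemma L2 z : 2 <= N -> m (h N) (m (g N.-1) z) = m (h 1) (m (h N) (m (h N) z)).
Proof.
move=> h2; case: hrel => _ R.
have gN : g N.-1 = h N.-1 by rewrite /g; move: h2; clear; by case: N => [|[|n]].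
have := R N.-1 N; rewrite (_ : N.-1.+1 = N); last by lia.
move=> /(_ ltac:(lia) ltac:(lia) (leqnn _)) E.
by rewrite gN (gmulA (h N) (h N)) -E -!gmulA h11.
Qed.

Lemma L3 k : k <= N -> hpow (m (h 1) (h N)) k = m (g k) (hpow (h N) k).
Proof.
elim: k => [|k IH] hk /=; first by rewrite gmul1.
by rewrite IH; [rewrite -gmulA Rp; [|lia]|lia].
Qed.

Lemma gNN : g N = h N.
Proof. by rewrite /g; move: hN; clear; case: N. Qed.

Lemma L2' : 2 <= N -> g N.-1 = m (iv (h N)) (m (h 1) (m (h N) (h N))).
Proof.
move=> h2; apply: (@gcancl _ (h N)); rewrite gmulKV.
by have := L2 e h2; rewrite !gmulr1.
Qed.

Lemma L4 : (2 <= N -> hpow (g N.-1) N = e) -> hpow (h N) N.+1 = e.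
Proof.
move=> Ho; case: (ltnP N 2) => h2.
  have E1 : N = 1 by lia.
  by rewrite E1 /=; apply: h11.
have := Ho h2; rewrite L2' // (gmulA (h 1)) hpow_conj => E.
have E2 : m (hpow (m (h 1) (h N)) N) (h N) = m e (h N).
  by rewrite gmul1; apply: (@gcancl _ (iv (h N))); rewrite E gmulV.
have := gcancr E2; rewrite L3 // gNN.
by [].
Qed.
End Rel.

Definition evalw (H : group_str) (f : nat -> gcar H) (w : seq (nat * bool)) : gcar H :=
  foldr (fun p acc => @gmul H (if p.2 then @ginv H (f p.1) else f p.1) acc) (@gone H) w.

Section Gen.
Variable H : group_str.
Local Notation m := (@gmul H).
Local Notation e := (@gone H).
Local Notation iv := (@ginv H).
Variables (N : nat) (h : nat -> gcar H).
Hypothesis h2 : 2 <= N.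
Hypothesis hrel : pres_relations (@gmul H) (@gone H) N h.
Hypothesis hord : hpow (h N) N.+1 = e.
Local Notation g := (gg h).
Let hN : 1 <= N. Proof. by lia. Qed.

Lemma hpowNinv : hpow (h N) N = iv (h N).
Proof. by apply: ginv_uniq; rewrite -hpowS'. Qed.

Lemma hpow2 x k : hpow x k.+2 = m (hpow x k) (m x x).
Proof. by rewrite hpowS' hpowS' -gmulA. Qed.

Lemma G1a a : a <= N.-2 -> m (hpow (h N) a) (g 1) = m (iv (g a)) (m (g a.+1) (hpow (h N) a)).
Proof. move=> ha; have := L1inv hN hrel (a:=a) (k:=1) e; rewrite !gmulr1 addn1; apply; lia. Qed.

Lemma G1b : m (hpow (h N) N.-1) (g 1) = m (iv (g N.-1)) (hpow (h N) N).
Proof.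
have := L1inv hN hrel (a:=N.-1) (k:=1) e; rewrite !gmulr1 addn1 (_ : N.-1.+1 = N); last by lia.
move=> ->; last by lia.
rewrite (gNN h hN); congr (m _ _).
by have -> : hpow (h N) N = hpow (h N) N.-1.+1 by congr hpow; lia.
Qed.

Lemma G1c : m (hpow (h N) N) (g 1) = m (g N.-1) (hpow (h N) N.-1).
Proof.
rewrite (L2' hN hrel h2) hpowNinv -!gmulA; congr (m _ _).
have -> : m (h N) (m (h N) (hpow (h N) N.-1)) = e.
  by rewrite -hord (_ : N.+1 = N.-1.+2) //; lia.
by rewrite gmulr1.
Qed.

Lemma G2b a : 1 <= a <= N ->
  m (hpow (h N) a) (g N.-1) = m (iv (g a.-1)) (m (g a) (hpow (h N) a.+1)).
Proof.
move=> ha; rewrite (_ : a = a.-1.+1); last by lia.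
rewrite hpowS' -gmulA -(gmulr1 (g N.-1)) (L2 hN hrel) // -[h 1]/(g 1) (L1inv hN hrel); last by lia.
rewrite gmulr1 addn1 -(hpow2 (h N) a.-1) //.
Qed.
End Gen.

Definition relH (H : group_str) N (h : nat -> gcar H) :=
  pres_relations (@gmul H) (@gone H) N h.

Lemma GEN1 N a : 2 <= N -> a <= N -> exists w c, all (fun p => p.1 <= N.-1) w /\
  forall (H : group_str) h, relH N h -> hpow (h N) N.+1 = @gone H ->
  @gmul H (hpow (h N) a) (gg h 1) = @gmul H (evalw (gg h) w) (hpow (h N) c).
Proof.
move=> h2 ha.
case: (ltnP a N.-1) => h3.
  exists [:: (a, true); (a.+1, false)], a; split; first by rewrite /= !andbT; lia.
  move=> H h hr ho; rewrite G1a //; last by lia.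
  by rewrite /evalw /= gmulr1 -gmulA.
case: (ltnP a N) => h4.
  have -> : a = N.-1 by lia.
  exists [:: (N.-1, true)], N; split; first by rewrite /= !andbT.
  by move=> H h hr ho; rewrite G1b // /evalw /= gmulr1.
have -> : a = N by lia.
exists [:: (N.-1, false)], N.-1; split; first by rewrite /= !andbT.
by move=> H h hr ho; rewrite G1c // /evalw /= gmulr1.
Qed.

Lemma GEN2 N a : 2 <= N -> a <= N -> exists w c, all (fun p => p.1 <= N.-1) w /\
  forall (H : group_str) h, relH N h -> hpow (h N) N.+1 = @gone H ->
  @gmul H (hpow (h N) a) (gg h N.-1) = @gmul H (evalw (gg h) w) (hpow (h N) c).
Proof.
move=> h2 ha.
case: a ha => [|a] ha.
  exists [:: (N.-1, false)], 0; split; first by rewrite /= !andbT.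
  by move=> H h hr ho; rewrite /evalw /= !gmulr1 gmul1.
case: (ltnP a.+1 N) => h4.
  exists [:: (a, true); (a.+1, false)], a.+2; split; first by rewrite /= !andbT; lia.
  move=> H h hr ho; rewrite G2b //.
  by rewrite /evalw /= gmulr1 -gmulA.
have E : a.+1 = N by lia.
exists [:: (N.-1, true)], N.+2; split; first by rewrite /= !andbT.
move=> H h hr ho; rewrite G2b //; try lia.
rewrite /evalw /= gmulr1; congr (gmul _ _).
  by rewrite -E.
by rewrite -E.
Qed.

Local Open Scope group_scope.

Lemma compA n (x y z : 'S_n.+1) : compp x (compp y z) = compp (compp x y) z.
Proof. by rewrite /compp mulgA. Qed.
Lemma comp1 n (x : 'S_n.+1) : compp 1 x = x.
Proof. by rewrite /compp mulg1. Qed.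
Lemma compV n (x : 'S_n.+1) : compp x^-1 x = 1.
Proof. by rewrite /compp mulgV. Qed.

Definition PG n : group_str := GroupStr (@compA n) (@comp1 n) (@compV n).

Lemma hpowP n (x : 'S_n.+1) k : hpow (H:=PG n) x k = x ^+ k.
Proof. elim: k => [|k IH] //=; by rewrite IH /compp expgSr. Qed.

Lemma relP n : @relH (PG n) n (r n).
Proof. exact: rel_perm. Qed.

Lemma ggP n k : gg (H:=PG n) (r n) k = r n k.
Proof. by case: k => //=; rewrite r0. Qed.

Definition jota n (s : 'S_n.+1) : 'S_n.+2 := lift_perm ord_max ord_max s.

Lemma jotaM n (s t : 'S_n.+1) : jota (s * t) = jota s * jota t.
Proof. by rewrite /jota lift_permM. Qed.
Lemma jota1 n : jota (1 : 'S_n.+1) = 1.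
Proof. exact: lift_perm1. Qed.
Lemma jotaV n (s : 'S_n.+1) : jota s^-1 = (jota s)^-1.
Proof. by rewrite /jota lift_permV. Qed.
Lemma jotaX n (s : 'S_n.+1) k : jota (s ^+ k) = jota s ^+ k.
Proof. elim: k => [|k IH]; first by rewrite !expg0 jota1. by rewrite !expgS jotaM IH. Qed.

Lemma jota_inj n : injective (@jota n).
Proof.
move=> s t E; apply/permP => x; apply: (@lift_inj _ ord_max).
by have := congr1 (fun p : 'S_n.+2 => p (lift ord_max x)) E; rewrite /jota /= !lift_perm_lift.
Qed.

Lemma val_liftmax n (y : 'I_n.+1) : val (lift (ord_max : 'I_n.+2) y) = val y.
Proof. by rewrite /= /bump leqNgt ltn_ord add0n. Qed.

Lemma jota_r n k : k <= n -> jota (r n k) = r n.+1 k.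
Proof.
move=> hk; apply/permP => x; case: (unliftP ord_max x) => [y ->|->].
  rewrite /jota lift_perm_lift; apply: val_inj.
  have hk1 : k <= n.+1 by lia.
  apply: (etrans (val_liftmax _)); apply: (etrans (rval y hk)).
  apply: (etrans _ (esym (rval (lift ord_max y) hk1))).
  case: y => y0 hy0 /=.
  have e : bump n.+1 y0 = y0 by rewrite /bump; case: leqP => h; lia.
  by rewrite e.
apply: val_inj; rewrite /jota lift_perm_id rval /=; last by lia.
case: ifP => h1; first by lia.
case: ifP => // /eqP; lia.
Qed.

Lemma jota_evalw n w : all (fun p => p.1 <= n) w ->
  jota (evalw (H:=PG n) (gg (H:=PG n) (r n)) w) = evalw (H:=PG n.+1) (gg (H:=PG n.+1) (r n.+1)) w.
Proof.
elim: w => [|[k b] w IH] /=; first by rewrite jota1.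
move=> /andP [hk hw]; rewrite /compp jotaM IH // !ggP.
by case: b; rewrite ?jotaV jota_r.
Qed.

Lemma cval n (x : 'I_n.+1) : val (r n n x) = (x + 1) %% n.+1.
Proof.
rewrite rval //; have hx := ltn_ord x.
case: ifP => h1; first by rewrite modn_small; lia.
case: ifP => h2; last by lia.
by move/eqP: h2 => ->; rewrite addn1 modnn.
Qed.

Lemma rpow n a (x : 'I_n.+1) : val ((r n n ^+ a) x) = (x + a) %% n.+1.
Proof.
elim: a => [|a IH]; first by rewrite expg0 perm1 addn0 modn_small.
by rewrite expgSr permM cval IH modnDml -addnA addn1.
Qed.

Lemma rpow_mod n a : r n n ^+ a = r n n ^+ (a %% n.+1).
Proof. by apply/permP => x; apply: val_inj; rewrite !rpow modnDmr. Qed.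

Lemma rorder n : r n n ^+ n.+1 = 1.
Proof. by rewrite rpow_mod modnn expg0. Qed.

Lemma fixmax n (p : 'S_n.+2) : p ord_max = ord_max -> exists t, p = jota t.
Proof.
move=> hp.
pose f (y : 'I_n.+1) := odflt y (unlift ord_max (p (lift ord_max y))).
have key : forall y, lift ord_max (f y) = p (lift ord_max y).
  move=> y; rewrite /f; case: unliftP => [z E|E] //=.
  have : lift ord_max y = ord_max by apply: (@perm_inj _ p); rewrite E hp.
  by move/eqP; rewrite eq_sym (negbTE (neq_lift _ _)).
have finj : injective f.
  by move=> y1 y2 E; apply: (@lift_inj _ ord_max); apply: (@perm_inj _ p); rewrite -!key E.
exists (perm finj); apply/permP => x; case: (unliftP ord_max x) => [y ->|->].
  by rewrite /jota lift_perm_lift permE key.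
by rewrite /jota lift_perm_id hp.
Qed.

Lemma decomp n (s : 'S_n.+2) : exists a t, s = r n.+1 n.+1 ^+ a * jota t.
Proof.
set y := s^-1 ord_max; set a := n.+1 - y.
have E : (r n.+1 n.+1 ^+ a) y = ord_max.
  apply: val_inj; rewrite rpow /=; have := ltn_ord y; move=> hy.
  by rewrite /a subnKC ?modn_small //; lia.
have [t Ht] : exists t, (r n.+1 n.+1 ^+ a)^-1 * s = jota t.
  apply: fixmax; by rewrite permM -E permK permKV.
by exists a, t; rewrite -Ht mulKVg.
Qed.

Lemma jota_fix n (t : 'S_n.+1) : jota t ord_max = ord_max.
Proof. exact: lift_perm_id. Qed.

Lemma WD n a b t u : r n.+1 n.+1 ^+ a * jota t = r n.+1 n.+1 ^+ b * jota u ->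
  a %% n.+2 = b %% n.+2 /\ t = u.
Proof.
set R := r n.+1 n.+1 => E.
set c := n.+2 - b %% n.+2.
have hcb : (c + b) %% n.+2 = 0.
  rewrite -modnDmr /c subnK ?modnn //; by apply: ltnW; rewrite ltn_mod.
have E2 : R ^+ (c + a) = jota (u * t^-1).
  have Ea : R ^+ a = R ^+ b * jota u * (jota t)^-1 by rewrite -E mulgK.
  by rewrite expgD Ea !mulgA -expgD rpow_mod hcb expg0 mul1g jotaM jotaV.
have hca : (c + a) %% n.+2 = 0.
  have := congr1 (fun p : 'S_n.+2 => val (p ord_max)) E2; rewrite /= rpow jota_fix /=.
  move=> h; apply/eqP; move: h; rewrite -modnDmr.
  have : (c + a) %% n.+2 < n.+2 by rewrite ltn_mod.
  case: ((c + a) %% n.+2) => // q hq.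
  rewrite addnS -addSn modnDl modn_small; lia.
have hab : a %% n.+2 = b %% n.+2.
  apply/eqP; rewrite -(eqn_modDl c); by apply/eqP; rewrite hca hcb.
split => //.
apply: jota_inj; apply: (@mulgI _ (R ^+ a)); by rewrite E rpow_mod -hab -rpow_mod.
Qed.

Definition pb (P : Prop) : bool := if excluded_middle_informative P then true else false.
Lemma pbP (P : Prop) : reflect P (pb P).
Proof. by rewrite /pb; case: excluded_middle_informative => h; constructor. Qed.

Definition Gen n := << [set r n (val i).+1 | i : 'I_n] >> = [set: 'S_n.+1].

Lemma gen_step n : Gen n -> Gen n.+1.
Proof.
move=> Gn; set A := [set r n.+1 (val i).+1 | i : 'I_n.+1].
have hi : forall t, jota t \in <<A>>.
  set B := [set t | jota t \in <<A>>].
  have gB : group_set B.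
    apply/group_setP; split; first by rewrite inE jota1 group1.
    by move=> x y; rewrite !inE jotaM; apply: groupM.
  move=> t; have : t \in <<[set r n (val i).+1 | i : 'I_n]>> by rewrite Gn inE.
  have sub : [set r n (val i).+1 | i : 'I_n] \subset B.
    apply/subsetP => x /imsetP [i _ ->]; rewrite inE jota_r; last exact: ltn_ord.
    apply: mem_gen; apply/imsetP; exists (widen_ord (leqnSn _) i) => //.
  by move=> /(subsetP (genS sub)); rewrite gen_set_id // inE.
have hR : r n.+1 n.+1 \in <<A>>.
  by apply: mem_gen; apply/imsetP; exists ord_max.
apply/eqP; rewrite eqEsubset subsetT /=; apply/subsetP => s _.
have [a [t ->]] := decomp s.
by rewrite groupM ?groupX ?hi.
Qed.

Definition Pres n := forall (H : group_str) (h : nat -> gcar H),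
  pres_relations (@gmul H) (@gone H) n h ->
  exists phi : 'S_n.+1 -> gcar H,
    (forall s t, phi (compp s t) = gmul (phi s) (phi t)) /\
    (forall i, 1 <= i <= n -> phi (r n i) = h i).

Section Hom.
Variables (H : group_str) (n : nat) (phi : 'S_n.+1 -> gcar H).
Hypothesis hom : forall s t, phi (compp s t) = gmul (phi s) (phi t).
Local Notation m := (@gmul H).
Local Notation e := (@gone H).

Lemma phi1 : phi 1 = e.
Proof.
apply: (@gcancl _ (phi 1)); rewrite gmulr1 -hom /compp mulg1 //.
Qed.

Lemma phiV s : phi s^-1 = ginv (phi s).
Proof. apply: ginv_uniq; by rewrite -hom /compp mulgV phi1. Qed.

Lemma phiX s k : phi (s ^+ k) = hpow (phi s) k.
Proof. elim: k => [|k IH] /=; first by rewrite expg0 phi1. by rewrite expgSr -IH -hom. Qed.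

Lemma phi_evalw (h : nat -> gcar H) w :
  (forall k, k <= n -> phi (r n k) = gg h k) ->
  all (fun p => p.1 <= n) w ->
  phi (evalw (H:=PG n) (gg (H:=PG n) (r n)) w) = evalw (gg h) w.
Proof.
move=> hr; elim: w => [|[k b] w IH] /=; first by rewrite /evalw /= phi1.
move=> /andP [hk hw]; rewrite hom IH // ggP.
by case: b; rewrite ?(phiV (r n k)) hr.
Qed.
End Hom.

Lemma pres_step n : Gen n -> Pres n -> Pres n.+1.
Proof.
move=> Gn Pn H h hrel.
have hrel_n : pres_relations (@gmul H) (@gone H) n h.
  case: hrel => h1 R; split => // i j hi hij hjn; apply: R => //; lia.
have [phi' [hom hval]] := Pn H h hrel_n.
have hrg : forall k, k <= n -> phi' (r n k) = gg h k.
  by case=> [|k] hk; [rewrite r0 (phi1 hom) | rewrite hval].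
have hord : hpow (h n.+1) n.+2 = @gone H.
  apply: (L4 (N:=n.+1)) => // h2; change (hpow (gg h n) n.+1 = gone H).
  by rewrite -hrg // -(phiX hom) rorder (phi1 hom).
set R := r n.+1 n.+1.
pose U := [set u : 'S_n.+1 | pb (forall a, exists c u', jota u * R ^+ a = R ^+ c * jota u' /\
   @gmul H (hpow (h n.+1) a) (phi' u) = @gmul H (phi' u') (hpow (h n.+1) c))].
have gU : group_set U.
  apply/group_setP; split.
    rewrite inE; apply/pbP => a; exists a, 1.
    by rewrite jota1 mul1g mulg1 (phi1 hom) gmulr1 gmul1.
  move=> x y; rewrite !inE => /pbP hx /pbP hy; apply/pbP => a.
  have [c2 [y' [E2 F2]]] := hy a.
  have [c1 [x' [E1 F1]]] := hx c2.
  exists c1, (x' * y'); split.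
    by rewrite (jotaM x y) -mulgA E2 mulgA E1 -mulgA -jotaM.
  rewrite -[x * y]/(compp y x) -[x' * y']/(compp y' x') !hom.
  by rewrite gmulA F2 -gmulA F1 gmulA.
pose UG := Group gU.
have genx : forall x : nat, (x = 1%N \/ x = n) -> 1 <= n -> r n x \in UG.
  move=> x hx hn1; rewrite inE; apply/pbP => a.
  set a0 := a %% n.+2.
  have ha0 : a0 <= n.+1 by rewrite -ltnS ltn_mod.
  have [w [c [hw HG]]] : exists w c, all (fun p => p.1 <= n) w /\
     forall (H : group_str) h, relH n.+1 h -> hpow (h n.+1) n.+2 = gone H ->
     gmul (hpow (h n.+1) a0) (gg h x) = gmul (evalw (gg h) w) (hpow (h n.+1) c).
    have h2 : 2 <= n.+1 by lia.
    by case: hx => ->; [exact: (GEN1 h2 ha0) | exact: (GEN2 h2 ha0)].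
  exists c, (evalw (H:=PG n) (gg (H:=PG n) (r n)) w); split.
    rewrite jota_r; last by case: hx => ->; lia.
    rewrite jota_evalw // /R rpow_mod.
    have := HG (PG n.+1) (r n.+1) (relP n.+1).
    rewrite !hpowP ggP => E; apply: E.
    by rewrite rorder.
  rewrite (hpow_mod a hord) (phi_evalw hom hrg hw) hrg; last by case: hx => ->; lia.
  exact: HG.
have gens : forall i, 1 <= i -> i <= n -> r n i \in UG.
  elim=> // i IH hi1 hin.
  case: i IH hi1 hin => [|i] IH _ hin; first by apply: genx; [left|lia].
  have E := (rel_perm n).2 i.+1 n is_true_true hin (leqnn n).
  rewrite /compp in E.
  have -> : r n i.+2 = (r n n)^-1 * (r n i.+1 * (r n n * r n 1)).
    by rewrite E mulKg.
  have g1 : r n 1 \in UG by apply: genx; [left|lia].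
  have gn : r n n \in UG by apply: genx; [right|lia].
  have gi : r n i.+1 \in UG by apply: IH; lia.
  by rewrite groupM ?groupV ?groupM.
have Uall : forall u, (forall a, exists c u', jota u * R ^+ a = R ^+ c * jota u' /\
   @gmul H (hpow (h n.+1) a) (phi' u) = @gmul H (phi' u') (hpow (h n.+1) c)).
  move=> u; have : u \in UG.
    have sub : [set r n (val i).+1 | i : 'I_n] \subset UG.
      apply/subsetP => x /imsetP [j _ ->]; apply: gens => //; exact: ltn_ord.
    by have := genS sub; rewrite Gn genGid => /subsetP; apply; rewrite inE.
  by rewrite inE => /pbP.
pose phi (s : 'S_n.+2) := if [pick p : 'I_n.+2 * 'S_n.+1 | s == R ^+ p.1 * jota p.2] is Some p
  then @gmul H (phi' p.2) (hpow (h n.+1) p.1) else @gone H.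
have phiE : forall a t, phi (R ^+ a * jota t) = @gmul H (phi' t) (hpow (h n.+1) a).
  move=> a t; rewrite /phi; case: pickP => [[a' t'] /eqP /= E|Hn].
    have [ha <-] := WD (esym E).
    by rewrite (hpow_mod a hord) (hpow_mod a' hord) ha.
  have := Hn (Ordinal (ltn_mod a n.+2), t).
  by rewrite /= -rpow_mod eqxx.
exists phi; split.
  move=> s x; have [a [t ->]] := decomp s; have [b [u ->]] := decomp x.
  have [c [u' [E F]]] := Uall u a.
  rewrite /compp.
  have -> : R ^+ b * jota u * (R ^+ a * jota t) = R ^+ (b + c) * jota (u' * t).
    by rewrite mulgA -(mulgA _ (jota u)) E !mulgA -expgD -mulgA -jotaM.
  rewrite !phiE -[u' * t]/(compp t u') hom addnC hpowD.
  by rewrite -!gmulA (gmulA (hpow _ a)) F -gmulA.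
move=> i /andP [hi1 hi2].
case: (ltnP i n.+1) => hi3.
  have -> : r n.+1 i = R ^+ 0 * jota (r n i) by rewrite expg0 mul1g jota_r.
  by rewrite phiE /= gmulr1 hval //; lia.
have Ei : i = n.+1 by lia.
have -> : r n.+1 i = R ^+ 1 * jota 1 by rewrite expg1 jota1 mulg1 Ei.
by rewrite phiE (phi1 hom) /= gmul1 gmulr1 Ei.
Qed.

Lemma main n : Gen n /\ Pres n.
Proof.
elim: n => [|n [Gn Pn]].
  split.
    apply/eqP; rewrite eqEcard subsetT cardsT card_Sn /=.
    exact: cardG_gt0.
  move=> H h _; exists (fun _ => gone H); split; first by move=> s t; rewrite gmul1.
  by move=> i /andP [a b]; move: a b; case: i.
split; [exact: gen_step | exact: pres_step].
Qed.

Theorem corollary5p3 (n : nat) (hn : 1 <= n) :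
  (* the r_i generate S_{n+1} *)
  << [set r n (val i).+1 | i : 'I_n] >> = [set: 'S_n.+1]
  (* the r_i satisfy the relations *)
  /\ pres_relations (@compp n) 1 n (r n)
  (* universal property: any family satisfying the relations in any group
     is the image of the r_i under a (unique) group homomorphism *)
  /\ (forall (H : group_str) (h : nat -> H),
        pres_relations (@gmul H) (gone H) n h ->
        exists phi : 'S_n.+1 -> H,
          (forall s t, phi (compp s t) = gmul (phi s) (phi t)) /\
          (forall i, 1 <= i <= n -> phi (r n i) = h i)).
Proof.
have [G P] := main n.
split; first exact: G.
split; first exact: rel_perm.
exact: P.
Qed.
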